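(* Let $\ell$ be a finite linear order with $|\ell|\ge2$, $\mathscr T$ a Schröder tree on $\ell$ enriched with connected graphs, with root $r$ and $g=\bigvee\mathscr T$. Suppose that for every internal vertex $w\neq r$ of $\mathscr T$ the graph $g_{\ell_w}$ is $r_w$-regular. Then $$\phi_g(x,t)=\Big(\prod_{w\in\mathrm{Iv}(\mathscr T),\,w\neq r}\frac{\phi_{(a_w,g_w)}(x+tN_{rw},t)}{x-r_w+t(r_w+N_{rw})}\Big)\,\phi_{(a_r,g_r)}(x,t).$$
   Context: All graphs finite and simple. $\phi_g(x,t)=\det\big(xI-(A(g)-tD(g))\big)$ with $A$ adjacency and $D$ diagonal degree matrix. Generalized composition: for a segmented partition $\pi=(\ell_1,\dots,\ell_k)$ of $\ell$ (nonempty consecutive segments whose concatenation is $\ell$), graphs $g_{\ell_j}$ on $\ell_j$ and a graph $h$ on $\pi$, $\bigvee_h(g_{\ell_1},\dots,g_{\ell_k})$ has vertex set $\ell$ and edges those of the $g_{\ell_j}$ plus all $\{x,y\}$, $x\in\ell_i,y\in\ell_j$, $\{\ell_i,\ell_j\}\in E(h)$. Graph-enriched Schröder tree on $\ell$: rooted plane tree with leaves the elements of $\ell$ left to right, each internal vertex having at least two children, with a graph $g_v$ on $\pi_v=(\ell_{v_1},\dots,\ell_{v_k})$ for each internal $v$ (children $v_1,\dots,v_k$ left to right, $\ell_u$ the leaves below $u$); enriched with connected graphs means every $g_v$ is connected. $\bigvee$ of a leaf is the one-vertex graph and $\bigvee\mathscr T=\bigvee_{g_r}(\bigvee\mathscr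 T_{r_1},\dots,\bigvee\mathscr T_{r_k})$ ($\mathscr T_u$ subtree at $u$); $g_{\ell_u}=\bigvee\mathscr T_u$; $a_v=(g_{\ell_{v_1}},\dots,g_{\ell_{v_k}})$. For internal $v$, with $n_i=|\ell_{v_i}|$, $\rho_i=\mathrm{reg}(g_{\ell_{v_i}})$ and $N_i=\sum_{s:\{\ell_{v_s},\ell_{v_i}\}\in E(g_v)}n_s$: $A(a_v,g_v)$ is the $k\times k$ matrix with diagonal $\rho_i$ and $(i,j)$ entry ($i\neq j$) $\sqrt{n_in_j}$ if $\{\ell_{v_i},\ell_{v_j}\}\in E(g_v)$, else $0$; $D(a_v,g_v)=\mathrm{diag}(\rho_i+N_i)$; $\phi_{(a_v,g_v)}(x,t)=\det\big(xI_k-(A(a_v,g_v)-tD(a_v,g_v))\big)$. For non-root internal $w$ with parent $u$, $N_w=\sum_{x:\{\ell_x,\ell_w\}\in E(g_u)}|\ell_x|$, and $N_{rw}=N_{w_1}+\cdots+N_{w_m}$ along the path $r=w_0,w_1,\dots,w_m=w$. *)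

(* Defs.v *)
From HB Require Import structures.
From mathcomp Require Import all_boot all_order all_algebra.
Set Implicit Arguments. Unset Strict Implicit. Unset Printing Implicit Defensive.
Import Order.TTheory GRing.Theory Num.Theory.

(* Plane rooted trees whose internal vertices carry a graph on their children.
   [Node cs e]: children cs (left to right), graph e on the child indices
   0..size cs - 1 (only values e i j with i,j < size cs matter).
   Leaves are numbered 0..nleaves-1 from left to right; the underlying linear
   order l is identified with 'I_(nleaves T). *)
Inductive stree : Type :=
| Leaf : stree
| Node : seq stree -> (nat -> nat -> bool) -> stree.

Fixpoint nleaves (t : stree) : nat :=
  match t with
  | Leaf => 1
  | Node cs _ => sumn (map nleaves cs)
  end.

Definition simple_graph (k : nat) (e : nat -> nat -> bool) : bool :=
  [forall i : 'I_k, forall j : 'I_k, e i j == e j i] &&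
  [forall i : 'I_k, ~~ e i i].

Definition connected_graph (k : nat) (e : nat -> nat -> bool) : bool :=
  [forall i : 'I_k, forall j : 'I_k,
     connect (fun a b : 'I_k => e a b) i j].

Fixpoint wf (t : stree) : bool :=
  match t with
  | Leaf => true
  | Node cs e =>
      [&& 2 <= size cs, simple_graph (size cs) e,
          connected_graph (size cs) e & all wf cs]
  end.

Definition children (t : stree) : seq stree :=
  if t is Node cs _ then cs else [::].
Definition cgraph (t : stree) : nat -> nat -> bool :=
  if t is Node _ e then e else (fun _ _ => false).

(* index of the block (child) containing leaf p, given the block sizes *)
Fixpoint blk_of (sz : seq nat) (p : nat) : nat :=
  match sz with
  | [::] => 0
  | s :: ss => if p < s then 0 else (blk_of ss (p - s)).+1
  end.

Definition blk_off (sz : seq nat) (i : nat) : nat := sumn (take i sz).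

(* adjacency of the generalized composition \bigvee T on the leaves *)
Fixpoint adjT (t : stree) : nat -> nat -> bool :=
  match t with
  | Leaf => fun _ _ => false
  | Node cs e =>
      let fs := map adjT cs in
      let sz := map nleaves cs in
      fun p q =>
        let bp := blk_of sz p in
        let bq := blk_of sz q in
        if bp == bq then
          nth (fun _ _ => false) fs bp (p - blk_off sz bp) (q - blk_off sz bp)
        else e bp bq
  end.

Definition deg (t : stree) (p : nat) : nat :=
  \sum_(j < nleaves t) adjT t p j.

Definition regular (t : stree) : bool :=
  [forall i : 'I_(nleaves t), forall j : 'I_(nleaves t), deg t i == deg t j].

(* reg(\bigvee t): the common degree (degree of the first leaf) *)
Definition reg (t : stree) : nat := deg t 0.

Fixpoint subtree (t : stree) (a : seq nat) : stree :=
  match a with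
  | [::] => t
  | i :: a' => subtree (nth Leaf (children t) i) a'
  end.

(* addresses of the internal vertices Iv(T); [::] is the root *)
Fixpoint Iv (t : stree) : seq (seq nat) :=
  match t with
  | Leaf => [::]
  | Node cs _ =>
      [::] :: (fix aux (i : nat) (l : seq stree) : seq (seq nat) :=
                 match l with
                 | [::] => [::]
                 | c :: l' => [seq i :: a | a <- Iv c] ++ aux i.+1 l'
                 end) 0 cs
  end.

Section Spectral.
Variable R : rcfType.
Local Open Scope ring_scope.

Definition phi_mat (n : nat) (A D : 'M[R]_n) (x t : R) : R :=
  \det (x%:M - (A - t *: D)).

Definition gA (T : stree) : 'M[R]_(nleaves T) :=
  \matrix_(i, j) (adjT T i j)%:R.
Definition gD (T : stree) : 'M[R]_(nleaves T) :=
  \matrix_(i, j) (if i == j then (deg T i)%:R else 0).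
Definition phi_g (T : stree) (x t : R) : R := phi_mat (gA T) (gD T) x t.

Definition Nchild (v : stree) (i : nat) : nat :=
  \sum_(s < size (children v) | cgraph v s i) nleaves (nth Leaf (children v) s).

Definition nodeA (v : stree) : 'M[R]_(size (children v)) :=
  \matrix_(i, j)
    (if i == j then (reg (nth Leaf (children v) i))%:R
     else if cgraph v i j then
       Num.sqrt ((nleaves (nth Leaf (children v) i) *
                  nleaves (nth Leaf (children v) j))%:R)
     else 0).
Definition nodeD (v : stree) : 'M[R]_(size (children v)) :=
  \matrix_(i, j)
    (if i == j then (reg (nth Leaf (children v) i) + Nchild v i)%:R else 0).
Definition phi_node (v : stree) (x t : R) : R := phi_mat (nodeA v) (nodeD v) x t.

End Spectral.

Definition N_path (T : stree) (a : seq nat) : nat :=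
  \sum_(k < size a) Nchild (subtree T (take k a)) (nth 0 a k).

(* Main.v *)
Require Import Defs.
From HB Require Import structures.
From mathcomp Require Import all_boot all_order all_algebra.
From mathcomp Require Import ring.
Import Order.TTheory GRing.Theory Num.Theory.
Local Open Scope ring_scope.
Set Implicit Arguments. Unset Strict Implicit. Unset Printing Implicit Defensive.

Lemma schur_det (V : comNzRingType) n k (X : 'M[V]_n) (U : 'M[V]_(n,k))
  (W : 'M[V]_(k,n)) (D : 'M[V]_k) :
  X *m U = U *m D -> \det (X - U *m W) * \det D = \det X * \det (D - W *m U).
Proof.
move=> XU.
pose Z := block_mx X U W 1%:M.
have hZ : \det Z = \det (X - U *m W).
  have := det_mulmx (block_mx 1%:M (-U) 0 1%:M) Z.
  rewrite /Z mulmx_block !mul1mx !mul0mx !add0r mulNmx mulmx1 addrN.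
  by rewrite det_ublock det_lblock !det1 !mul1r mulr1 => <-.
have := det_mulmx Z (block_mx 1%:M U 0 (-D)).
rewrite {1}/Z mulmx_block !mulmx1 !mulmx0 !addr0 mulmxN XU addrN det_lblock.
rewrite det_ublock det1 mul1r hZ.
have hN : forall m (A : 'M[V]_m), \det (- A) = (-1) ^+ m * \det A.
  by move=> m A; rewrite -scaleN1r detZ.
rewrite mul1mx. have -> : W *m U - D = - (D - W *m U) by rewrite opprB.
rewrite !hN => h.
have hs : (-1) ^+ k * (-1) ^+ k = 1 :> V by rewrite -exprMn mulrNN mulr1 expr1n.
have h2 : (-1)^+k * (\det (X - U *m W) * \det D) = (-1)^+k * (\det X * \det (D - W *m U)).
  by rewrite mulrCA -h mulrCA.
by rewrite -[LHS]mul1r -hs -mulrA h2 mulrA hs mul1r.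
Qed.
Lemma blk_off0 sz : blk_off sz 0 = 0%N.
Proof. by case: sz. Qed.
Lemma blk_offS s ss i : blk_off (s :: ss) i.+1 = (s + blk_off ss i)%N.
Proof. by []. Qed.

Lemma blk_of_off sz i b : (b < nth 0%N sz i)%N -> blk_of sz (blk_off sz i + b) = i.
Proof.
elim: sz i => [|s ss IH] [|i] //=.
- by move=> hb; rewrite hb.
- move=> hb; rewrite blk_offS -addnA ltnNge leq_addr /= addKn IH //.
Qed.

Lemma blk_props sz p : (p < sumn sz)%N ->
  [/\ (blk_of sz p < size sz)%N, (blk_off sz (blk_of sz p) <= p)%N &
      (p - blk_off sz (blk_of sz p) < nth 0%N sz (blk_of sz p))%N].
Proof.
elim: sz p => [|s ss IH] p //=.
case: ifP => hp.
  by move=> _; rewrite subn0.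
move=> h; have h' : (p - s < sumn ss)%N by rewrite ltn_subLR // leqNgt hp.
have [h1 h2 h3] := IH _ h'.
rewrite blk_offS; split => //.
  by rewrite -leq_subRL // leqNgt hp.
by rewrite subnDA.
Qed.

Lemma sum_blocks (V : nmodType) sz (G : nat -> V) :
  \sum_(q < sumn sz) G q = \sum_(i < size sz) \sum_(b < nth 0%N sz i) G (blk_off sz i + b)%N.
Proof.
elim: sz G => [|s ss IH] G /=; first by rewrite !big_ord0.
rewrite big_split_ord /= big_ord_recl /=.
congr (_ + _).
rewrite (IH (fun q => G (s + q)%N)); apply: eq_bigr => i _.
rewrite /bump leq0n add1n add0n.
by apply: eq_bigr => b _; rewrite blk_offS addnA.
Qed.

Definition bdf (V : nmodType) (sz : seq nat) (F : nat -> nat -> nat -> V) (p q : nat) : V :=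
  let i := blk_of sz p in
  if i == blk_of sz q then F i (p - blk_off sz i)%N (q - blk_off sz i)%N else 0.

Lemma det_bd (V : comNzRingType) sz (F : nat -> nat -> nat -> V) :
  \det (\matrix_(p, q < sumn sz) bdf sz F p q) =
  \prod_(i < size sz) \det (\matrix_(a, b < nth 0%N sz i) F i a b).
Proof.
elim: sz F => [|s ss IH] F /=.
  by rewrite big_ord0 det_mx00.
rewrite big_ord_recl /=.
rewrite (_ : \matrix_(p, q) _ = block_mx (\matrix_(a, b < s) F 0%N a b) 0 0
   (\matrix_(p, q < sumn ss) bdf ss (fun i => F i.+1) p q)).
  by rewrite det_ublock IH.
apply/matrixP => p q.
case: (split_ordP p) => p' ->; case: (split_ordP q) => q' ->;
  rewrite ?block_mxEul ?block_mxEur ?block_mxEdl ?block_mxEdr !mxE /bdf /=.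
- by rewrite !ltn_ord !subn0.
- by rewrite ltn_ord ltnNge leq_addr.
- by rewrite ltn_ord ltnNge leq_addr.
- rewrite !ltnNge !leq_addr /= !addKn eqSS.
  by case: ifP => // _; rewrite blk_offS !subnDl.
Qed.
Section Ind.
Variable P : stree -> Prop.
Hypothesis HL : P Leaf.
Hypothesis HN : forall cs e, (forall i, (i < size cs)%N -> P (nth Leaf cs i)) -> P (Node cs e).
Fixpoint stree_ind2 (t : stree) : P t :=
  match t with
  | Leaf => HL
  | Node cs e => @HN cs e ((fix aux (l : seq stree) : forall i, (i < size l)%N -> P (nth Leaf l i) :=
        match l return forall i, (i < size l)%N -> P (nth Leaf l i) with
        | [::] => fun i hi => False_ind _ (eq_ind false (fun b : bool => if b then False else True) I true (etrans (esym (ltn0 i)) hi))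
        | c :: l' => fun i => match i return (i < size (c :: l'))%N -> P (nth Leaf (c :: l') i) with
                     | 0 => fun _ => stree_ind2 c
                     | i'.+1 => fun hi => aux l' i' hi end
        end) cs)
  end.
End Ind.

Lemma nth_le_sumn s i : (nth 0 s i <= sumn s)%N.
Proof. by elim: s i => [|x s IH] [|i] //=; [rewrite leq_addr | rewrite (leq_trans (IH i)) // leq_addl]. Qed.

Lemma wf_nleaves t : wf t -> (0 < nleaves t)%N.
Proof.
elim/stree_ind2: t => // cs e IH /= /and4P [h2 _ _ hall].
have h0 : (0 < size cs)%N by apply: leq_trans h2.
have := IH 0%N h0 (all_nthP Leaf hall 0%N h0).
move=> hp; apply: (leq_trans hp).
by rewrite -(nth_map Leaf 0%N) // nth_le_sumn.
Qed.

Lemma sum_blocksN (V : nmodType) sz (G : nat -> V) :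
  \sum_(q < sumn sz) G q = \sum_(0 <= i < size sz) \sum_(b < nth 0%N sz i) G (blk_off sz i + b)%N.
Proof. by rewrite sum_blocks big_mkord. Qed.

Lemma det_bdN (V : comNzRingType) sz (F : nat -> nat -> nat -> V) :
  \det (\matrix_(p, q < sumn sz) bdf sz F p q) =
  \prod_(0 <= i < size sz) \det (\matrix_(a, b < nth 0%N sz i) F i a b).
Proof. by rewrite det_bd big_mkord. Qed.

Lemma natsumE (I : Type) (r : seq I) (P : pred I) (F : I -> nat) :
  \big[+%R/0%R]_(i <- r | P i) F i = \big[addn/0%N]_(i <- r | P i) F i.
Proof. by []. Qed.

Lemma big_size_map (V : Type) (idx : V) (op : V -> V -> V) (A : Type) (f : A -> nat) (s : seq A) (F : nat -> V) :
  \big[op/idx]_(i < size (map f s)) F i = \big[op/idx]_(i < size s) F i.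
Proof. by move: (size_map f s); move: (size (map f s)) => m ->. Qed.

Lemma det_cast (V : comNzRingType) m1 m2 (F : nat -> nat -> V) : m1 = m2 ->
  \det (\matrix_(a, b < m1) F a b) = \det (\matrix_(a, b < m2) F a b).
Proof. by move->. Qed.

Section Decomp.
Variable R : rcfType.
Variable t : R.
Variables (cs : seq stree) (e : nat -> nat -> bool).
Local Notation T := (Node cs e).
Local Notation sz := (map nleaves cs).
Local Notation k := (size cs).
Local Notation child i := (nth Leaf cs i).
Local Notation blk := (blk_of (map nleaves cs)).
Local Notation off := (blk_off (map nleaves cs)).
Hypothesis wfT : wf T.
Hypothesis regc : forall i, (i < k)%N -> regular (child i).

Lemma e_sym i j : (i < k)%N -> (j < k)%N -> e i j = e j i.
Proof.
move: wfT => /= /and4P [_ /andP [hs _] _ _] hi hj.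
by have /eqP := forallP (forallP hs (Ordinal hi)) (Ordinal hj).
Qed.

Lemma e_irr i : (i < k)%N -> e i i = false.
Proof.
move: wfT => /= /and4P [_ /andP [_ hs] _ _] hi.
by apply/negbTE; have := forallP hs (Ordinal hi).
Qed.

Lemma Nc_eq i : (i < k)%N -> Nchild T i = (\sum_(j < k) e i j * nleaves (child j))%N.
Proof.
move=> hi; rewrite /Nchild /= big_mkcond /=; apply: eq_bigr => j _.
by rewrite (e_sym hi (ltn_ord j)); case: (e j i); rewrite ?mul1n ?mul0n.
Qed.

Lemma adjT_eq (p q : nat) : (p < sumn sz)%N ->
  adjT T p q = if blk p == blk q then adjT (child (blk p)) (p - off (blk p)) (q - off (blk p))
               else e (blk p) (blk q).
Proof.
move=> hp; have [h1 _ _] := blk_props hp.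
rewrite /=; case: ifP => // _.
by rewrite size_map in h1; rewrite (nth_map Leaf).
Qed.

Lemma deg_eq (p : nat) : (p < sumn sz)%N ->
  deg T p = (deg (child (blk p)) (p - off (blk p)) + Nchild T (blk p))%N.
Proof.
move=> hp; have [h1 h2 h3] := blk_props hp.
rewrite size_map in h1.
rewrite /deg (sum_blocksN (map nleaves cs) (fun q => nat_of_bool (adjT T p q))).
rewrite natsumE size_map big_mkord (Nc_eq h1).
have H : forall (j : 'I_k), (\sum_(b < nth 0%N sz j) (adjT T p (off j + b)%N : nat))%R =
   (if blk p == j then deg (child j) (p - off j) else e (blk p) j * nleaves (child j))%N.
  move=> j; rewrite natsumE.
  under eq_bigr => b _ do rewrite (adjT_eq _ hp) (blk_of_off (ltn_ord b)).
  case: eqP => [hj|hne].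
    rewrite hj (nth_map Leaf) //.
    by under eq_bigr => b _ do rewrite addKn.
  by rewrite sum_nat_const card_ord mulnC (nth_map Leaf).
under eq_bigr => j _ do rewrite H.
rewrite (bigD1 (Ordinal h1)) //= eqxx [in RHS](bigD1 (Ordinal h1)) //= e_irr // mul0n add0n.
congr (_ + _); apply: eq_bigr => j hj.
case: eqP => // hb; case/negP: hj; apply/eqP; apply: val_inj; by rewrite /= hb.
Qed.

Lemma reg_eq i a : (i < k)%N -> (a < nleaves (child i))%N -> deg (child i) a = reg (child i).
Proof.
move=> hi ha; have h0 : (0 < nleaves (child i))%N by apply: leq_ltn_trans ha.
by have /forallP/(_ (Ordinal ha))/forallP/(_ (Ordinal h0))/eqP := regc hi.
Qed.

Definition Fc (i a b : nat) : {poly R} :=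
  (a == b)%:R * 'X - ((adjT (child i) a b)%:R - (a == b)%:R * (t * (deg (child i) a + Nchild T i)%:R))%:P.
Definition cval i : R := (reg (child i))%:R - t * (reg (child i) + Nchild T i)%:R.
Definition Fmat i : 'M[{poly R}]_(nleaves (child i)) := \matrix_(a, b) Fc i a b.
Definition Xbd : 'M[{poly R}]_(sumn sz) := \matrix_(p, q) bdf sz Fc p q.
Definition Um : 'M[{poly R}]_(sumn sz, k) := \matrix_(p, i) ((blk p == i)%:R).
Definition Wm : 'M[{poly R}]_(k, sumn sz) := \matrix_(i, q) ((e i (blk q))%:R)%:P.
Definition Dm : 'M[{poly R}]_k := diag_mx (\row_i ('X - (cval i)%:P)).

Lemma UW_entry (p q : 'I_(sumn sz)) : (Um *m Wm) p q = ((e (blk p) (blk q))%:R)%:P.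
Proof.
have [h1 _ _] := blk_props (ltn_ord p); rewrite size_map in h1.
rewrite !mxE (bigD1 (Ordinal h1)) //= big1 ?addr0.
  by rewrite !mxE eqxx mul1r.
move=> j hj; rewrite !mxE; case: eqP; last by rewrite mul0r.
move=> hb; case/negP: hj; apply/eqP; apply: val_inj; by rewrite /= hb.
Qed.

Lemma claimA : char_poly_mx (gA R T - t *: gD R T) = Xbd - Um *m Wm.
Proof.
apply/matrixP => p q.
rewrite [in RHS]mxE [X in _ = _ + X]mxE UW_entry !mxE /bdf.
have hp := ltn_ord p; have hq := ltn_ord q.
have [h1 h2 h3] := blk_props hp; have [h1' h2' h3'] := blk_props hq.
rewrite (adjT_eq _ hp) (deg_eq hp).
have [hb|hb] := eqVneq (blk p) (blk q).
  rewrite -hb e_irr -?hb ?(size_map nleaves cs) //.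
  have E : (p == q) = (p - off (blk p) == q - off (blk p))%N.
    rewrite -val_eqE /=.
    have h2q : (off (blk p) <= q)%N by rewrite hb.
    by rewrite -{1}(subnKC h2) -{1}(subnKC h2q) eqn_add2l.
  rewrite E /Fc; case: (_ == _) => /=;
    by rewrite ?mulr1n ?mulr0n ?mul1r ?mul0r ?polyC0 ?mulr0 ?subr0.
  by rewrite size_map in h1.
have Epq : (p == q) = false by apply/negbTE/eqP => hpq; move: hb; rewrite hpq eqxx.
by rewrite Epq /= mulr0n mulr0 subr0 sub0r.
Qed.


Lemma sum_ind (V : pzSemiRingType) m a (y : V) : (a < m)%N ->
  \sum_(b < m) (a == b)%:R * y = y.
Proof.
move=> ha; rewrite (bigD1 (Ordinal ha)) //= eqxx mul1r big1 ?addr0 //.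
move=> b hb; case: eqP => [hab|]; last by rewrite mul0r.
by case/negP: hb; apply/eqP; apply: val_inj; rewrite /= hab.
Qed.

Lemma sumFc i a : (i < k)%N -> (a < nleaves (child i))%N ->
  \sum_(b < nleaves (child i)) Fc i a b = 'X - (cval i)%:P.
Proof.
move=> hi ha; rewrite /Fc sumrB sum_ind // -(rmorph_sum polyC) sumrB sum_ind //.
rewrite -(natr_sum _ _ _ (fun b : 'I_(nleaves (child i)) => nat_of_bool (adjT (child i) a b))).
by rewrite -/(deg (child i) a) (reg_eq hi ha) /cval.
Qed.

Lemma claimB : Xbd *m Um = Um *m Dm.
Proof.
apply/matrixP => p i.
rewrite mul_mx_diag !mxE.
under eq_bigr => q _ do rewrite !mxE.
rewrite (sum_blocksN sz (fun q => bdf sz Fc p q * (blk q == i)%:R)).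
rewrite size_map big_mkord (bigD1 i) //= [X in _ + X = _]big1 ?addr0; last first.
  move=> j hj; apply: big1 => b _.
  rewrite (blk_of_off (ltn_ord b)).
  by case: eqP => [hji|]; [case/negP: hj; apply/eqP; apply: val_inj | rewrite mulr0].
have hp := ltn_ord p; have [h1 h2 h3] := blk_props hp.
under eq_bigr => b _ do rewrite (blk_of_off (ltn_ord b)) eqxx mulr1 /bdf (blk_of_off (ltn_ord b)).
case: eqP => [hb|hb].
  rewrite hb (nth_map Leaf) //.
  under eq_bigr => b _ do rewrite addKn.
  rewrite sumFc ?mul1r //.
  by move: h3; rewrite hb (nth_map Leaf).
by rewrite big1_eq (_ : false%:R = 0) ?mul0r.
Qed.


Lemma claimC : Wm *m Um = \matrix_(i, j) ((e i j * nleaves (child j))%:R)%:P.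
Proof.
apply/matrixP => i j; rewrite !mxE.
under eq_bigr => q _ do rewrite !mxE.
rewrite (sum_blocksN sz (fun q => ((e i (blk q))%:R)%:P * (blk q == j)%:R)).
rewrite size_map big_mkord (bigD1 j) //= [X in _ + X = _]big1 ?addr0; last first.
  move=> j' hj; apply: big1 => b _.
  rewrite (blk_of_off (ltn_ord b)).
  by case: eqP => [hji|]; [case/negP: hj; apply/eqP; apply: val_inj | rewrite mulr0].
under eq_bigr => b _ do rewrite (blk_of_off (ltn_ord b)) eqxx mulr1.
by rewrite sumr_const card_ord (nth_map Leaf) // -rmorphMn -mulr_natr -natrM.
Qed.

Lemma claimD : \det Xbd = \prod_(i < k) \det (Fmat i).
Proof.
rewrite /Xbd det_bdN size_map big_mkord; apply: eq_bigr => i _; rewrite /Fmat.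
by apply: det_cast; apply: nth_map.
Qed.

Lemma claimE i : (i < k)%N -> root (\det (Fmat i)) (cval i).
Proof.
move=> hi.
have h0 : (0 < nleaves (child i))%N.
  by apply: wf_nleaves; move: wfT => /= /and4P [_ _ _ /all_nthP]; apply.
rewrite /root -horner_evalE -det_map_mx -det_tr; apply/det0P.
exists (const_mx 1).
  apply/negP => /eqP/matrixP/(_ 0 (Ordinal h0)); rewrite !mxE; apply/eqP; exact: oner_neq0.
apply/matrixP => z b; rewrite !mxE.
under eq_bigr => a _ do rewrite !mxE mul1r.
rewrite -(rmorph_sum (horner_eval (cval i))).
rewrite sumFc //; change (('X - (cval i)%:P).[cval i] = 0); by rewrite hornerXsubC subrr.
Qed.

Lemma claimF i x : (\det (Fmat i)).[x] = phi_g (child i) (x + t * (Nchild T i)%:R) t.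
Proof.
rewrite -horner_evalE -det_map_mx /phi_g /phi_mat; congr (\det _); apply/matrixP => a b.
rewrite !mxE /Fc /= /horner_eval !(hornerE, hornerMn).
have E : (nat_of_ord a == nat_of_ord b) = (a == b) by [].
rewrite E; case: eqP => _ /=; rewrite ?mulr1n ?mulr0n ?natrD ?hornerE; ring.
Qed.

Lemma npos i : (i < k)%N -> (0 < nleaves (child i))%N.
Proof. by move=> hi; apply: wf_nleaves; move: wfT => /= /and4P [_ _ _ /all_nthP]; apply. Qed.

Lemma claimG x : (\det (Dm - Wm *m Um)).[x] = phi_node T x t.
Proof.
rewrite claimC -horner_evalE -det_map_mx /phi_node /phi_mat.
set Y := map_mx _ _.
pose s := \row_(i < k) Num.sqrt ((nleaves (child i))%:R : R).
pose s' := \row_(i < k) (Num.sqrt ((nleaves (child i))%:R : R))^-1.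
have sn0 : forall i : 'I_k, Num.sqrt ((nleaves (child i))%:R : R) != 0.
  by move=> i; rewrite lt0r_neq0 // sqrtr_gt0 ltr0n npos.
have -> : (x%:M - (nodeA R T - t *: nodeD R T) : 'M_k) = diag_mx s *m Y *m diag_mx s'.
  rewrite mul_mx_diag mul_diag_mx; apply/matrixP => i j; rewrite !mxE /=.
  have [<-|hij] := eqVneq i j.
    rewrite ?eqxx /horner_eval e_irr // mul0n !mulr1n !(hornerE, hornerMn) /cval.
    by field; apply: sn0.
  rewrite ?(negbTE hij) !mulr0n /horner_eval !(hornerE, hornerMn).
  case: (e i j) => /=; last by rewrite mul0n mulr0n ?oppr0 ?mulr0 ?mul0r ?subr0 ?addr0 ?oppr0.
  rewrite !natrM mulr1n mul1r sqrtrM ?ler0n //.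
  set si := Num.sqrt (nleaves (child i))%:R; set sj := Num.sqrt (nleaves (child j))%:R.
  have hj2 : (nleaves (child j))%:R = sj ^+ 2 :> R by rewrite /sj sqr_sqrtr // ler0n.
  rewrite hj2; field; exact: sn0.
rewrite !det_mulmx !det_diag mulrAC -big_split /= big1 ?mul1r // => i _.
by rewrite !mxE mulfV.
Qed.

Definition qpoly i : {poly R} := \det (Fmat i) %/ ('X - (cval i)%:P).

Lemma qpolyK i : (i < k)%N -> qpoly i * ('X - (cval i)%:P) = \det (Fmat i).
Proof. by move=> hi; rewrite divpK // dvdp_XsubCl claimE. Qed.

Lemma phi_mat_cp n (A D : 'M[R]_n) x : phi_mat A D x t = (char_poly (A - t *: D)).[x].
Proof.
rewrite /char_poly -horner_evalE -det_map_mx /phi_mat; congr (\det _).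
apply/matrixP => a b; rewrite !mxE rmorphB rmorphMn /= !horner_evalE hornerX hornerC.
by case: (a == b); rewrite ?mulr1n ?mulr0n ?hornerE.
Qed.

Lemma decomp_poly : char_poly (gA R T - t *: gD R T) = \prod_(i < k) qpoly i * \det (Dm - Wm *m Um).
Proof.
have h := schur_det Wm claimB.
rewrite /char_poly claimA.
have hP : \prod_(i < k) ('X - (cval i)%:P) != 0.
  by apply/prodf_neq0 => i _; rewrite polyXsubC_eq0.
apply: (mulIf hP).
rewrite mulrAC -big_split /=.
rewrite [in RHS](eq_bigr (fun i : 'I_k => \det (Fmat i))); last by move=> i _; rewrite qpolyK.
rewrite -claimD -h.
congr (_ * _); rewrite det_diag; apply: eq_bigr => i _; by rewrite mxE.
Qed.

Lemma decomp x : phi_g T x t = \prod_(i < k) (qpoly i).[x] * phi_node T x t.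
Proof. by rewrite /phi_g phi_mat_cp decomp_poly hornerM horner_prod claimG. Qed.

Lemma qpoly_spec i x : (i < k)%N ->
  phi_g (child i) (x + t * (Nchild T i)%:R) t = (x - cval i) * (qpoly i).[x].
Proof. by move=> hi; rewrite -claimF -qpolyK // hornerM hornerXsubC mulrC. Qed.

Lemma qpoly_leaf i : (i < k)%N -> child i = Leaf -> qpoly i = 1.
Proof.
move=> hi hL.
have hP : ('X - (cval i)%:P) != 0 by rewrite polyXsubC_eq0.
apply: (mulIf hP); rewrite mul1r qpolyK //.
rewrite /Fmat (det_cast _ (_ : nleaves (child i) = 1%N)); last by rewrite hL.
rewrite det_mx11 mxE /Fc /cval hL /reg /deg /= big_ord1 /=.
by rewrite !mul1r.
Qed.
End Decomp.


Fixpoint ivaux (i : nat) (l : seq stree) : seq (seq nat) :=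
  match l with
  | [::] => [::]
  | c :: l' => [seq i :: a | a <- Iv c] ++ ivaux i.+1 l'
  end.

Lemma Iv_node cs e : Iv (Node cs e) = [::] :: ivaux 0 cs.
Proof. by []. Qed.

Lemma ivaux_nonnil j cs a : a \in ivaux j cs -> a != [::].
Proof.
elim: cs j => [|c cs IH] j //=; rewrite mem_cat => /orP [/mapP [b _ ->] //|].
exact: IH.
Qed.

Lemma mem_ivaux j cs i a : (i < size cs)%N -> a \in Iv (nth Leaf cs i) -> ((j + i)%N :: a) \in ivaux j cs.
Proof.
elim: cs j i => [|c cs IH] j [|i] //= hi ha; rewrite mem_cat.
  by rewrite addn0 (map_f (cons j) ha).
by rewrite -addSnnS (IH j.+1 i) ?orbT.
Qed.

Lemma prod_ivaux (V : comNzRingType) j cs (G : seq nat -> V) :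
  \prod_(a <- ivaux j cs) G a = \prod_(i < size cs) \prod_(a <- Iv (nth Leaf cs i)) G ((j + i)%N :: a).
Proof.
elim: cs j => [|c cs IH] j /=; first by rewrite big_nil big_ord0.
rewrite big_cat big_map big_ord_recl /= addn0 IH.
by congr (_ * _); apply: eq_bigr => i _; rewrite addSnnS.
Qed.

Lemma N_path_cons T i a : N_path T (i :: a) = (Nchild T i + N_path (nth Leaf (children T) i) a)%N.
Proof. by rewrite /N_path /= big_ord_recl /=. Qed.

Lemma prod_Iv_nonnil (V : comNzRingType) cs e (G : seq nat -> V) :
  \prod_(a <- Iv (Node cs e) | a != [::]) G a = \prod_(a <- ivaux 0 cs) G a.
Proof.
rewrite Iv_node big_cons eqxx /= big_seq_cond [RHS]big_seq; apply: eq_bigl => a.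
by case h: (a \in ivaux 0 cs) => //=; rewrite (ivaux_nonnil h).
Qed.

Section Main.
Variable R : rcfType.
Variable t : R.

Definition num (T : stree) (x : R) (a : seq nat) : R :=
  phi_node (subtree T a) (x + t * (N_path T a)%:R) t.
Definition den (T : stree) (x : R) (a : seq nat) : R :=
  x - (reg (subtree T a))%:R + t * ((reg (subtree T a) + N_path T a)%N)%:R.

Definition isNode (T : stree) : bool := if T is Node _ _ then true else false.

Definition stmt (T : stree) : Prop :=
  isNode T -> wf T ->
  (forall a, a \in Iv T -> a != [::] -> regular (subtree T a)) ->
  forall x, (forall a, a \in Iv T -> a != [::] -> den T x a != 0) ->
  phi_g T x t = (\prod_(a <- Iv T | a != [::]) (num T x a / den T x a)) * phi_node (subtree T [::]) x t.

Lemma regular_leaf : regular Leaf.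
Proof. by apply/forallP => i; apply/forallP => j; rewrite /deg !big_ord1. Qed.

Lemma main_gen T : stmt T.
Proof.
elim/stree_ind2: T => // cs e IH _ wfT hreg x hden.
have memi : forall i a, (i < size cs)%N -> a \in Iv (nth Leaf cs i) -> (i :: a) \in Iv (Node cs e).
  by move=> i a hi ha; rewrite Iv_node inE (mem_ivaux 0 hi ha) orbT.
have wfc : forall i, (i < size cs)%N -> wf (nth Leaf cs i).
  by move=> i hi; move: wfT => /= /and4P [_ _ _ /all_nthP]; apply.
have regc : forall i, (i < size cs)%N -> regular (nth Leaf cs i).
  move=> i hi; case hc: (nth Leaf cs i) => [|cs' e']; first exact: regular_leaf.
  have h0 : [::] \in Iv (nth Leaf cs i) by rewrite hc Iv_node inE eqxx.
  by have := hreg [:: i] (memi i [::] hi h0) isT; rewrite /= hc.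
rewrite (decomp t wfT regc x) Iv_node big_cons eqxx /=.
rewrite [in RHS]big_seq_cond.
rewrite [in RHS](eq_bigl (fun a => a \in ivaux 0 cs)); last first.
  by move=> a; case h: (a \in ivaux 0 cs) => //=; rewrite (ivaux_nonnil h).
rewrite -[in RHS]big_seq prod_ivaux; congr (_ * _); apply: eq_bigr => i _.
have hi := ltn_ord i.
rewrite add0n.
case hc: (nth Leaf cs i) => [|cs' e'].
  by rewrite big_nil (qpoly_leaf t wfT regc hi hc) hornerE.
set c := Node cs' e'.
set x' := x + t * (Nchild (Node cs e) i)%:R.
have hnum : forall a : seq nat, num (Node cs e) x (nat_of_ord i :: a) = num c x' a.
  move=> a; rewrite /num N_path_cons /= hc natrD /x'; congr (phi_node _ _ _); ring.
have hden' : forall a : seq nat, den (Node cs e) x (nat_of_ord i :: a) = den c x' a.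
  move=> a; rewrite /den N_path_cons /= hc /x' !natrD; ring.
under eq_bigr => a _ do rewrite hnum hden'.
have hregc : forall a, a \in Iv c -> a != [::] -> regular (subtree c a).
  move=> a ha hna; have hm : a \in Iv (nth Leaf cs i) by rewrite hc.
  have := hreg (nat_of_ord i :: a) (memi i a hi hm) isT.
  by rewrite /= hc.
have hdenc : forall a, a \in Iv c -> a != [::] -> den c x' a != 0.
  by move=> a ha hna; rewrite -hden'; apply: hden => //; apply: memi; rewrite ?hc.
have wfc' : wf c by rewrite /c -hc; apply: wfc.
have := IH i hi; rewrite hc => /(_ isT wfc' hregc x' hdenc).
have := qpoly_spec t wfT regc x hi; rewrite hc -/x' => ->.
rewrite prod_Iv_nonnil Iv_node big_cons.
have hd0 : den c x' [::] = x - cval t cs e i.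
  by rewrite /den /N_path big_ord0 /cval hc /x' addn0; ring.
have hd : x - cval t cs e i != 0.
  rewrite -hd0 -hden'; apply: hden => //; apply: memi => //; by rewrite hc Iv_node inE.
have hn0 : num c x' [::] = phi_node c x' t by rewrite /num /N_path big_ord0 mulr0 addr0.
rewrite hn0 hd0 => h.
apply: (mulfI hd); rewrite h; field; exact: hd.
Qed.
End Main.

Theorem mainTheorem10 (R : rcfType) (T : stree) (x t : R) :
  wf T -> (2 <= nleaves T)%N ->
  (forall a, a \in Iv T -> a != [::] -> regular (subtree T a)) ->
  (forall a, a \in Iv T -> a != [::] ->
     x - (reg (subtree T a))%:R + t * ((reg (subtree T a) + N_path T a)%N)%:R
       != 0) ->
  phi_g T x t =
    (\prod_(a <- Iv T | a != [::])
        (phi_node (subtree T a) (x + t * (N_path T a)%:R) t /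
         (x - (reg (subtree T a))%:R
            + t * ((reg (subtree T a) + N_path T a)%N)%:R)))
    * phi_node (subtree T [::]) x t.
Proof.
move=> wfT h2 hreg hden.
have hN : isNode T by move: h2; case: T {wfT hreg hden}.
exact: (@main_gen R t T hN wfT hreg x hden).
Qed.
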